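(* Let $c_0,c_1,c_2,c_3$ be numbers, not all zero, let $\{V_n\}_{n\in\mathbb Z}$ be the generalized Tetranacci sequence with $V_j=c_j$ ($j=0,1,2,3$), and let $GV_n=V_n+iV_{n-1}$ for all integers $n$ (the Gaussian generalized Tetranacci numbers). Let $\alpha,\beta,\gamma,\delta$ be the four roots of $x^4-x^3-x^2-x-1=0$ and set, for $r\in\{\alpha,\beta,\gamma,\delta\}$, $$K_r=\frac{r-1}{5r-8}\bigl(V_3r^3+(V_0+V_1+V_2)r^2+(V_1+V_2)r+V_2\bigr),$$ and $A=K_\alpha$, $B=K_\beta$, $C=K_\gamma$, $D=K_\delta$. Then for every integer $n$, $$GV_n=\left(A\alpha^{n-6}+B\beta^{n-6}+C\gamma^{n-6}+D\delta^{n-6}\right)+i\left(A\alpha^{n-7}+B\beta^{n-7}+C\gamma^{n-7}+D\delta^{n-7}\right).$$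
   Context: The generalized Tetranacci sequence is defined by $V_n=V_{n-1}+V_{n-2}+V_{n-3}+V_{n-4}$ with initial values $V_0,V_1,V_2,V_3$, and is extended to negative indices by $V_{n-4}=V_n-V_{n-1}-V_{n-2}-V_{n-3}$, so the recurrence holds for all integers $n$. Equivalently, $GV_n$ satisfies the same recurrence with $GV_0=c_0+i(c_3-c_2-c_1-c_0)$, $GV_1=c_1+ic_0$, $GV_2=c_2+ic_1$, $GV_3=c_3+ic_2$. *)

(* Defs.v *)
(* Numbers live in an arbitrary numeric closed field C
   (e.g. the complex numbers), which has the imaginary unit 'i. *)
From HB Require Import structures.
From mathcomp Require Import all_boot all_order all_algebra.
Set Implicit Arguments. Unset Strict Implicit. Unset Printing Implicit Defensive.
Import Order.TTheory GRing.Theory Num.Theory.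
Local Open Scope ring_scope.

Definition tetranacci_rec (C : ringType) (V : int -> C) : Prop :=
  forall n : int, V (n + 4) = V (n + 3) + V (n + 2) + V (n + 1) + V n.

Definition GV (C : numClosedFieldType) (V : int -> C) (n : int) : C :=
  V n + 'i * V (n - 1).

Definition Kcoef (C : fieldType) (V : int -> C) (r : C) : C :=
  (r - 1) / (5 * r - 8) *
  (V 3 * r ^+ 3 + (V 0 + V 1 + V 2) * r ^+ 2 + (V 1 + V 2) * r + V 2).

(* Main.v *)
Require Import Defs.
From HB Require Import structures.
From mathcomp Require Import all_boot all_order all_algebra.
From mathcomp Require Import ring.
Import Order.TTheory GRing.Theory Num.Theory.
Local Open Scope ring_scope.

Section Aux.
Context {C : numClosedFieldType}.

Lemma win_up (V W : int -> C) : tetranacci_rec V -> tetranacci_rec W ->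
  forall n, (V n = W n /\ V (n+1) = W (n+1) /\ V (n+2) = W (n+2) /\ V (n+3) = W (n+3)) ->
  (V (n+1) = W (n+1) /\ V (n+1+1) = W (n+1+1) /\ V (n+1+2) = W (n+1+2) /\ V (n+1+3) = W (n+1+3)).
Proof.
move=> hV hW n [h0 [h1 [h2 h3]]].
have e1 : n + 1 + 1 = n + 2 by rewrite -addrA.
have e2 : n + 1 + 2 = n + 3 by rewrite -addrA.
have e3 : n + 1 + 3 = n + 4 by rewrite -addrA.
by rewrite e1 e2 e3 hV hW h0 h1 h2 h3.
Qed.

Lemma win_down (V W : int -> C) : tetranacci_rec V -> tetranacci_rec W ->
  forall n, (V n = W n /\ V (n+1) = W (n+1) /\ V (n+2) = W (n+2) /\ V (n+3) = W (n+3)) ->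
  (V (n-1) = W (n-1) /\ V (n-1+1) = W (n-1+1) /\ V (n-1+2) = W (n-1+2) /\ V (n-1+3) = W (n-1+3)).
Proof.
move=> hV hW n [h0 [h1 [h2 h3]]].
have e1 : n - 1 + 1 = n by rewrite subrK.
have e2 : n - 1 + 2 = n + 1 by rewrite -addrA.
have e3 : n - 1 + 3 = n + 2 by rewrite -addrA.
have e4 : n - 1 + 4 = n + 3 by rewrite -addrA.
rewrite e1 e2 e3; split => //.
have HV := hV (n - 1); have HW := hW (n - 1).
rewrite e1 e2 e3 e4 in HV HW.
have : V (n-1) = V (n+3) - V (n+2) - V (n+1) - V n by rewrite HV; ring.
have : W (n-1) = W (n+3) - W (n+2) - W (n+1) - W n by rewrite HW; ring.
by move=> -> ->; rewrite h0 h1 h2 h3.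
Qed.

Lemma rec_unique (V W : int -> C) : tetranacci_rec V -> tetranacci_rec W ->
  V 0 = W 0 -> V 1 = W 1 -> V 2 = W 2 -> V 3 = W 3 -> forall n, V n = W n.
Proof.
move=> hV hW h0 h1 h2 h3.
have base : V 0 = W 0 /\ V (0+1) = W (0+1) /\ V (0+2) = W (0+2) /\ V (0+3) = W (0+3).
  by rewrite !add0r.
have up : forall m : nat, let n := (m%:Z) in
   V n = W n /\ V (n+1) = W (n+1) /\ V (n+2) = W (n+2) /\ V (n+3) = W (n+3).
  elim=> [//|m IH] /=.
  have -> : (m.+1)%:Z = m%:Z + 1 by rewrite -addn1 PoszD.
  exact: win_up.
have dn : forall m : nat, let n := (- (m%:Z)) in
   V n = W n /\ V (n+1) = W (n+1) /\ V (n+2) = W (n+2) /\ V (n+3) = W (n+3).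
  elim=> [//|m IH] /=.
  have -> : - (m.+1)%:Z = - m%:Z - 1 by rewrite -addn1 PoszD opprD.
  exact: win_down.
case=> m; first by case: (up m).
rewrite NegzE; by case: (dn m.+1).
Qed.

Lemma deriv_root (a : C) (q : {poly C}) : ((('X - a%:P) * q)^`()).[a] = q.[a].
Proof.
by rewrite derivM derivXsubC hornerD !hornerM hornerXsubC subrr mul0r addr0 hornerC mul1r.
Qed.

Lemma root_facts (a : C) (q : {poly C}) :
  ('X^4 - 'X^3 - 'X^2 - 'X - 1 : {poly C}) = ('X - a%:P) * q ->
  a ^+ 4 - a ^+ 3 - a ^+ 2 - a - 1 = 0 /\ 4 * a ^+ 3 - 3 * a ^+ 2 - 2 * a - 1 = q.[a].
Proof.
move=> H; split.
  have := congr1 (fun p => p.[a]) H => /=.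
  by rewrite hornerM hornerXsubC subrr mul0r !hornerE.
have := congr1 (fun p => (p^`()).[a]) H => /=.
rewrite deriv_root => <-.
rewrite !derivE !hornerE /=.
ring.
Qed.

Lemma no_double (r : C) : r ^+ 4 - r ^+ 3 - r ^+ 2 - r - 1 = 0 ->
  4 * r ^+ 3 - 3 * r ^+ 2 - 2 * r - 1 = 0 -> False.
Proof.
move=> h1 h2.
have : (563%:R : C) = (-573 + 396 * r - 64 * r^+2) * (r ^+ 4 - r ^+ 3 - r ^+ 2 - r - 1)
   + (10 + 157 * r - 103 * r^+2 + 16 * r^+3) * (4 * r ^+ 3 - 3 * r ^+ 2 - 2 * r - 1) by ring.
rewrite h1 h2 !mulr0 addr0 => /eqP; by rewrite pnatr_eq0.
Qed.

Lemma lag (a b c d x0 x1 x2 x3 : C) :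
  a - b != 0 -> a - c != 0 -> a - d != 0 -> b - c != 0 -> b - d != 0 -> c - d != 0 ->
  (x3 * a^+3 + x2 * a^+2 + x1 * a + x0) / ((a - b) * ((a - c) * (a - d)))
  + (x3 * b^+3 + x2 * b^+2 + x1 * b + x0) / ((b - a) * ((b - c) * (b - d)))
  + (x3 * c^+3 + x2 * c^+2 + x1 * c + x0) / ((c - a) * ((c - b) * (c - d)))
  + (x3 * d^+3 + x2 * d^+2 + x1 * d + x0) / ((d - a) * ((d - b) * (d - c))) = x3.
Proof.
move=> hab hac had hbc hbd hcd.
have hba : b - a != 0 by rewrite -opprB oppr_eq0.
have hca : c - a != 0 by rewrite -opprB oppr_eq0.
have hda : d - a != 0 by rewrite -opprB oppr_eq0.
have hcb : c - b != 0 by rewrite -opprB oppr_eq0.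
have hdb : d - b != 0 by rewrite -opprB oppr_eq0.
have hdc : d - c != 0 by rewrite -opprB oppr_eq0.
by field; rewrite hab hac had hbc hbd hcd hba hca hda hcb hdb hdc.
Qed.

Lemma term (r D R Q : C) (m : nat) : r != 0 -> r - 1 != 0 -> 5 * r - 8 != 0 ->
  (r - 1) * D = r ^+ 3 * (5 * r - 8) -> r ^+ 3 * Q = R * r ^+ m ->
  (r - 1) / (5 * r - 8) * Q * (r ^+ m)^-1 = R / D.
Proof.
move=> r0 r1 r58 hD hR.
have rm : r ^+ m != 0 by rewrite expf_neq0.
have -> : D = r ^+ 3 * (5 * r - 8) / (r - 1).
  by rewrite -hD mulrC mulKf.
have -> : R = r ^+ 3 * Q / r ^+ m.
  by rewrite hR mulfK.
by field; rewrite r0 r1 r58 rm.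
Qed.

Lemma nz0 (r : C) : r ^+ 4 - r ^+ 3 - r ^+ 2 - r - 1 = 0 -> r != 0.
Proof.
move=> hp.
have h : r * (r ^+ 3 - r ^+ 2 - r - 1) = 1.
  transitivity ((r ^+ 4 - r ^+ 3 - r ^+ 2 - r - 1) + 1); first by ring.
  by rewrite hp add0r.
apply/eqP => h0; move: h; rewrite h0 mul0r => /eqP; by rewrite eq_sym oner_eq0.
Qed.

Lemma kterm (V : int -> C) (r D : C) :
  r ^+ 4 - r ^+ 3 - r ^+ 2 - r - 1 = 0 -> 4 * r ^+ 3 - 3 * r ^+ 2 - 2 * r - 1 = D -> D != 0 ->
  [/\ Kcoef V r * r ^ (0 - 6) =
        (V 0 * r^+3 + (V 1 - V 0) * r^+2 + (V 2 - V 1 - V 0) * r + (V 3 - V 2 - V 1 - V 0)) / D,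
      Kcoef V r * r ^ (1 - 6) =
        (V 1 * r^+3 + (V 2 - V 1) * r^+2 + (V 3 - V 2 - V 1) * r + V 0) / D,
      Kcoef V r * r ^ (2 - 6) =
        (V 2 * r^+3 + (V 3 - V 2) * r^+2 + (V 0 + V 1) * r + V 1) / D
    & Kcoef V r * r ^ (3 - 6) =
        (V 3 * r^+3 + (V 0 + V 1 + V 2) * r^+2 + (V 1 + V 2) * r + V 2) / D].
Proof.
move=> hp hd dn.
have r0 : r != 0 by exact: nz0.
have hD : (r - 1) * D = r ^+ 3 * (5 * r - 8).
  rewrite -hd; apply/eqP; rewrite -subr_eq0; apply/eqP.
  transitivity (- (r ^+ 4 - r ^+ 3 - r ^+ 2 - r - 1)); first by ring.
  by rewrite hp oppr0.
have r1 : r - 1 != 0.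
  apply/eqP => h; move: hp.
  have -> : r = 1 by apply/eqP; rewrite -subr_eq0 h.
  rewrite !expr1n => /eqP.
  have -> : (1 - 1 - 1 - 1 - 1 : C) = - 3%:R by rewrite !opprD; ring.
  by rewrite oppr_eq0 pnatr_eq0.
have r58 : 5 * r - 8 != 0.
  apply/eqP => h; move: hD; rewrite h mulr0 => /eqP; rewrite mulf_eq0 (negbTE r1) /=.
  by rewrite (negbTE dn).
set Q := V 3 * r^+3 + (V 0 + V 1 + V 2) * r^+2 + (V 1 + V 2) * r + V 2.
set R2 := V 2 * r^+3 + (V 3 - V 2) * r^+2 + (V 0 + V 1) * r + V 1.
set R1 := V 1 * r^+3 + (V 2 - V 1) * r^+2 + (V 3 - V 2 - V 1) * r + V 0.
set R0 := V 0 * r^+3 + (V 1 - V 0) * r^+2 + (V 2 - V 1 - V 0) * r + (V 3 - V 2 - V 1 - V 0).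
have e2 : r * R2 = Q.
  apply/eqP; rewrite -subr_eq0; apply/eqP.
  transitivity (V 2 * (r ^+ 4 - r ^+ 3 - r ^+ 2 - r - 1)); first by rewrite /R2 /Q; ring.
  by rewrite hp mulr0.
have e1 : r * R1 = R2.
  apply/eqP; rewrite -subr_eq0; apply/eqP.
  transitivity (V 1 * (r ^+ 4 - r ^+ 3 - r ^+ 2 - r - 1)); first by rewrite /R2 /R1; ring.
  by rewrite hp mulr0.
have e0 : r * R0 = R1.
  apply/eqP; rewrite -subr_eq0; apply/eqP.
  transitivity (V 0 * (r ^+ 4 - r ^+ 3 - r ^+ 2 - r - 1)); first by rewrite /R0 /R1; ring.
  by rewrite hp mulr0.
rewrite /Kcoef -/Q.
split.
- have -> : r ^ (0 - 6 : int) = (r ^+ 6)^-1 by [].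
  apply: term => //; rewrite -e2 -e1 -e0; ring.
- have -> : r ^ (1 - 6 : int) = (r ^+ 5)^-1 by [].
  apply: term => //; rewrite -e2 -e1; ring.
- have -> : r ^ (2 - 6 : int) = (r ^+ 4)^-1 by [].
  apply: term => //; rewrite -e2; ring.
- have -> : r ^ (3 - 6 : int) = (r ^+ 3)^-1 by [].
  apply: term => //; ring.
Qed.

Lemma powrec (r : C) (n : int) : r != 0 -> r ^+ 4 - r ^+ 3 - r ^+ 2 - r - 1 = 0 ->
  r ^ (n + 4 - 6) = r ^ (n + 3 - 6) + r ^ (n + 2 - 6) + r ^ (n + 1 - 6) + r ^ (n - 6).
Proof.
move=> r0 hp.
have ek : forall k : int, n + k - 6 = (n - 6) + k by move=> k; ring.
rewrite !ek (expfzDr (n - 6) 4 r0) (expfzDr (n - 6) 3 r0) (expfzDr (n - 6) 2 r0) (expfzDr (n - 6) 1 r0) expr1z.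
rewrite -!exprnP.
apply/eqP; rewrite -subr_eq0; apply/eqP.
transitivity (r ^ (n - 6) * (r ^+ 4 - r ^+ 3 - r ^+ 2 - r - 1)); first by ring.
by rewrite hp mulr0.
Qed.

End Aux.

Theorem mainTheorem2 (C : numClosedFieldType) (c0 c1 c2 c3 : C)
  (V : int -> C) (alpha beta gamma delta : C) :
  ~ (c0 = 0 /\ c1 = 0 /\ c2 = 0 /\ c3 = 0) ->
  V 0 = c0 -> V 1 = c1 -> V 2 = c2 -> V 3 = c3 ->
  tetranacci_rec V ->
  ('X^4 - 'X^3 - 'X^2 - 'X - 1 : {poly C}) =
    \prod_(r <- [:: alpha; beta; gamma; delta]) ('X - r%:P) ->
  forall n : int,
    GV V n =
      (Kcoef V alpha * alpha ^ (n - 6) + Kcoef V beta * beta ^ (n - 6)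
       + Kcoef V gamma * gamma ^ (n - 6) + Kcoef V delta * delta ^ (n - 6))
      + 'i * (Kcoef V alpha * alpha ^ (n - 7) + Kcoef V beta * beta ^ (n - 7)
       + Kcoef V gamma * gamma ^ (n - 7) + Kcoef V delta * delta ^ (n - 7)).
Proof.
move=> _ _ _ _ _ hV HP n.
set a := alpha; set b := beta; set c := gamma; set d := delta.
rewrite !big_cons big_nil mulr1 in HP.
have HPb : ('X^4 - 'X^3 - 'X^2 - 'X - 1 : {poly C}) =
   ('X - b%:P) * (('X - a%:P) * (('X - c%:P) * ('X - d%:P))) by rewrite HP mulrCA.
have HPc : ('X^4 - 'X^3 - 'X^2 - 'X - 1 : {poly C}) =
   ('X - c%:P) * (('X - a%:P) * (('X - b%:P) * ('X - d%:P))) by rewrite HP; ring.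
have HPd : ('X^4 - 'X^3 - 'X^2 - 'X - 1 : {poly C}) =
   ('X - d%:P) * (('X - a%:P) * (('X - b%:P) * ('X - c%:P))) by rewrite HP; ring.
have [pa Da] := root_facts _ _ HP.
have [pb Db] := root_facts _ _ HPb.
have [pc Dc] := root_facts _ _ HPc.
have [pd Dd] := root_facts _ _ HPd.
rewrite !hornerM !hornerXsubC in Da Db Dc Dd.
have Dan : (a - b) * ((a - c) * (a - d)) != 0.
  by apply/eqP => h; apply: (no_double _ pa); rewrite Da h.
have Dbn : (b - a) * ((b - c) * (b - d)) != 0.
  by apply/eqP => h; apply: (no_double _ pb); rewrite Db h.
have Dcn : (c - a) * ((c - b) * (c - d)) != 0.
  by apply/eqP => h; apply: (no_double _ pc); rewrite Dc h.
have Ddn : (d - a) * ((d - b) * (d - c)) != 0.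
  by apply/eqP => h; apply: (no_double _ pd); rewrite Dd h.
have := Dan; rewrite !mulf_eq0 !negb_or => /and3P [hab hac had].
have := Dbn; rewrite !mulf_eq0 !negb_or => /and3P [_ hbc hbd].
have := Dcn; rewrite !mulf_eq0 !negb_or => /and3P [_ _ hcd].
have nz := @nz0 C.
pose W := fun m : int => Kcoef V a * a ^ (m - 6) + Kcoef V b * b ^ (m - 6)
       + Kcoef V c * c ^ (m - 6) + Kcoef V d * d ^ (m - 6).
have hW : tetranacci_rec W.
  move=> m; rewrite /W.
  rewrite (powrec _ m (nz _ pa) pa) (powrec _ m (nz _ pb) pb) (powrec _ m (nz _ pc) pc)
          (powrec _ m (nz _ pd) pd).
  ring.
have [a0 a1 a2 a3] := kterm V _ _ pa Da Dan.
have [b0 b1 b2 b3] := kterm V _ _ pb Db Dbn.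
have [c0' c1' c2' c3'] := kterm V _ _ pc Dc Dcn.
have [d0 d1 d2 d3] := kterm V _ _ pd Dd Ddn.
have E := rec_unique _ _ hV hW.
have E' : forall m, V m = W m.
  apply: E; rewrite /W.
  - by rewrite a0 b0 c0' d0 lag.
  - by rewrite a1 b1 c1' d1 lag.
  - by rewrite a2 b2 c2' d2 lag.
  - by rewrite a3 b3 c3' d3 lag.
rewrite /GV !E' /W.
have -> : n - 1 - 6 = n - 7 by ring.
by [].
Qed.
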